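(* Let $\Gamma$ be a connected amply regular graph with diameter $d=5$ and parameters $(v,k,\lambda,\mu)$, where $\mu=\frac{k-1}{2}$ and $k\ge5$ is odd. Then $\Gamma$ is the $5$-cube.
   Context: An amply regular graph with parameters $(v,k,\lambda,\mu)$ is a $k$-regular graph on $v$ vertices in which any two adjacent vertices have exactly $\lambda$ common neighbours and any two vertices at distance $2$ have exactly $\mu$ common neighbours. *)

(* Defs.v *)
From mathcomp Require Import all_boot.
Set Implicit Arguments. Unset Strict Implicit. Unset Printing Implicit Defensive.

Definition simple_graph (T : finType) (e : rel T) : Prop :=
  symmetric e /\ irreflexive e.

Definition common_nbrs (T : finType) (e : rel T) (x y : T) : {set T} :=
  [set z | e x z && e y z].

Definition is_dist (T : finType) (e : rel T) (x y : T) (n : nat) : Prop :=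
  (exists p : seq T, [/\ path e x p, last x p = y & size p = n]) /\
  (forall p : seq T, path e x p -> last x p = y -> n <= size p).

Definition connected_graph (T : finType) (e : rel T) : Prop :=
  forall x y : T, connect e x y.

Definition has_diameter (T : finType) (e : rel T) (d : nat) : Prop :=
  (forall x y n, is_dist e x y n -> n <= d) /\ exists x y, is_dist e x y d.

Definition amply_regular (T : finType) (e : rel T) (v k lam mu : nat) : Prop :=
  [/\ #|T| = v,
      forall x : T, #|[set y | e x y]| = k,
      forall x y : T, e x y -> #|common_nbrs e x y| = lam &
      forall x y : T, is_dist e x y 2 -> #|common_nbrs e x y| = mu].

Definition cube_vertex (n : nat) := {ffun 'I_n -> bool}.
Definition cube_adj (n : nat) : rel (cube_vertex n) :=
  fun u w => #|[set i | u i != w i]| == 1.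

Definition graph_iso (T T' : finType) (e : rel T) (e' : rel T') : Prop :=
  exists f : T -> T', bijective f /\ forall x y, e' (f x) (f y) = e x y.

(* Main.v *)
Require Import Defs.
From mathcomp Require Import all_boot.
From mathcomp Require Import zify.
Set Implicit Arguments. Unset Strict Implicit. Unset Printing Implicit Defensive.

Section Dist.
Variables (T : finType) (e : rel T).
Hypothesis esym : symmetric e.
Hypothesis eirr : irreflexive e.

Fixpoint wk (n : nat) (x : T) : {set T} :=
  if n is n'.+1 then [set y | [exists w in wk n' x, e w y]] else [set x].

Lemma wkS n x y : (y \in wk n.+1 x) = [exists w in wk n x, e w y].
Proof. by rewrite /= inE. Qed.

Lemma wk_path n x y : y \in wk n x <->
  exists p : seq T, [/\ path e x p, last x p = y & size p = n].
Proof.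
split.
  elim: n y => [|n IH] y.
    by rewrite inE => /eqP ->; exists [::].
  rewrite wkS => /existsP [w /andP [/IH [p [h1 h2 h3]] ew]].
  exists (rcons p y); rewrite rcons_path last_rcons size_rcons h1 h2 h3 ew.
  by split.
case=> p [hp hl hs]; elim/last_ind: p n y hp hl hs => [|p a IH] n y.
  by move=> _ /= <- <-; rewrite inE.
rewrite rcons_path last_rcons size_rcons => /andP [hp ha] <- <-.
rewrite wkS; apply/existsP; exists (last x p); rewrite ha andbT.
exact: (IH _ _ hp erefl erefl).
Qed.

Lemma wk_cat a b x y z : y \in wk a x -> z \in wk b y -> z \in wk (a + b) x.
Proof.
move=> hy; elim: b z => [|b IH] z.
  by rewrite inE => /eqP ->; rewrite addn0.
rewrite wkS addnS wkS => /existsP [w /andP [hw ew]].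
by apply/existsP; exists w; rewrite IH.
Qed.

Lemma wk1 x y : (y \in wk 1 x) = e x y.
Proof.
rewrite wkS; apply/existsP/idP => [[w /andP [] ]|h].
  by rewrite inE => /eqP ->.
by exists x; rewrite inE eqxx.
Qed.

Lemma wk_sym n x y : y \in wk n x -> x \in wk n y.
Proof.
elim: n y => [|n IH] y.
  by rewrite !inE => /eqP ->.
rewrite wkS => /existsP [w /andP [hw ew]].
have h1 : w \in wk 1 y by rewrite wk1 esym.
by have := wk_cat h1 (IH _ hw); rewrite add1n.
Qed.

Hypothesis conn : connected_graph e.

Lemma conn_wk x y : exists n, y \in wk n x.
Proof.
have /connectP [p hp hl] := conn x y.
by exists (size p); apply/wk_path; exists p; split.
Qed.

Definition dist x y := ex_minn (conn_wk x y).

Lemma dist_wk x y : y \in wk (dist x y) x.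
Proof. by rewrite /dist; case: ex_minnP. Qed.

Lemma dist_min x y n : y \in wk n x -> dist x y <= n.
Proof. by rewrite /dist; case: ex_minnP => m _ h /h. Qed.

Lemma dist_tri x y z : dist x z <= dist x y + dist y z.
Proof. exact/dist_min/(wk_cat (dist_wk x y) (dist_wk y z)). Qed.

Lemma dist_sym x y : dist x y = dist y x.
Proof.
by apply/eqP; rewrite eqn_leq !dist_min // wk_sym // dist_wk.
Qed.

Lemma dist0 x : dist x x = 0.
Proof. by apply/eqP; rewrite -leqn0 dist_min // inE. Qed.

Lemma dist0E x y : (dist x y == 0) = (x == y).
Proof.
apply/idP/idP => [/eqP h|/eqP ->]; last by rewrite dist0.
by have := dist_wk x y; rewrite h inE eq_sym.
Qed.

Lemma dist1E x y : (dist x y == 1) = e x y.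
Proof.
apply/idP/idP => [/eqP h|h].
  by have := dist_wk x y; rewrite h wk1.
have : dist x y <= 1 by rewrite dist_min // wk1.
have : dist x y != 0.
  by rewrite dist0E; apply/eqP => xy; move: h; rewrite xy eirr.
lia.
Qed.

Lemma dist_pred x y n : dist x y = n.+1 -> exists2 w, e w y & dist x w = n.
Proof.
move=> h; have := dist_wk x y; rewrite h wkS => /existsP [w /andP [hw ew]].
exists w => //; have := dist_min hw; have := dist_tri x w y.
move: ew; rewrite -dist1E => /eqP ->; lia.
Qed.

Lemma is_distE x y n : is_dist e x y n <-> dist x y = n.
Proof.
split.
  case=> [[p [h1 h2 h3]] h].
  apply/eqP; rewrite eqn_leq dist_min /=; last by apply/wk_path; exists p.
  by have /wk_path [q [q1 q2 q3]] := dist_wk x y; rewrite -q3 h.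
move=> <-; split; first exact/wk_path/dist_wk.
move=> p hp hl; apply: dist_min; apply/wk_path; by exists p.
Qed.

End Dist.

Lemma card_setP (T : finType) (X : {set T}) (P : pred T) :
  #|[set b in X | P b]| = \sum_(b in X) P b.
Proof.
rewrite -sum1_card big_mkcond /= [RHS]big_mkcond /=; apply: eq_bigr => i _.
by rewrite inE; case: (i \in X); case: (P i).
Qed.

Lemma dcount (T : finType) (A B : {set T}) (r : T -> T -> bool) :
  \sum_(a in A) #|[set b in B | r a b]| = \sum_(b in B) #|[set a in A | r a b]|.
Proof.
under eq_bigr => a _ do rewrite card_setP.
under [RHS]eq_bigr => b _ do rewrite card_setP.
exact: exchange_big.
Qed.

Lemma sum_const_eq (T : finType) (A : {set T}) (F : T -> nat) c :
  (forall a, a \in A -> F a = c) -> \sum_(a in A) F a = #|A| * c.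
Proof.
move=> h; rewrite (eq_bigr (fun _ => c)) //.
by rewrite sum_nat_const.
Qed.

Lemma sum_const_le (T : finType) (A : {set T}) (F : T -> nat) c :
  (forall a, a \in A -> F a <= c) -> \sum_(a in A) F a <= #|A| * c.
Proof.
move=> h; rewrite -sum_nat_const; exact: leq_sum.
Qed.

Lemma sum_const_ge (T : finType) (A : {set T}) (F : T -> nat) c :
  (forall a, a \in A -> c <= F a) -> #|A| * c <= \sum_(a in A) F a.
Proof.
move=> h; rewrite -sum_nat_const; exact: leq_sum.
Qed.

Lemma card_disj_le (T : finType) (A B S : {set T}) :
  A \subset S -> B \subset S -> (forall u, u \in A -> u \notin B) ->
  #|A| + #|B| <= #|S|.
Proof.
move=> hA hB hd.
have -> : #|A| + #|B| = #|A :|: B|.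
  rewrite cardsU; suff -> : A :&: B = set0 by rewrite cards0 subn0.
  by apply/setP => u; rewrite !inE; case: (boolP (u \in A)) => // /hd /negbTE ->.
by apply: subset_leq_card; rewrite subUset hA.
Qed.

Lemma cover2 (T : finType) (A B S : {set T}) u :
  A \subset S -> B \subset S -> (forall w, w \in A -> w \notin B) ->
  #|S| <= #|A| + #|B| -> u \in S -> (u \in A) || (u \in B).
Proof.
move=> hA hB hd hc hu.
have e1 : #|A :|: B| = #|A| + #|B|.
  rewrite cardsU; suff -> : A :&: B = set0 by rewrite cards0 subn0.
  by apply/setP => w; rewrite !inE; case: (boolP (w \in A)) => // /hd /negbTE ->.
have : A :|: B == S.
  by rewrite eqEcard subUset hA hB e1.
by move/eqP => eS; move: hu; rewrite -eS inE.
Qed.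

Lemma add_one (T : finType) (S S' : {set T}) :
  S \subset S' -> #|S'| = #|S|.+1 -> exists2 a, a \notin S & S' = a |: S.
Proof.
move=> hs hc.
have : #|S' :\: S| == 1 by rewrite cardsDS // hc subSnn.
case/cards1P => a ha.
have aS' : a \in S' :\: S by rewrite ha inE.
exists a; first by move: aS'; rewrite inE => /andP [].
apply/setP => w; rewrite in_setU1.
case: (boolP (w \in S)) => [wS|wS]; first by rewrite orbT (subsetP hs).
rewrite orbF; apply/idP/idP => [wS'|/eqP ->]; last by move: aS'; rewrite inE => /andP [].
have : w \in S' :\: S by rewrite inE wS wS'.
by rewrite ha inE.
Qed.

Lemma image_full (aT rT : finType) (g : aT -> rT) (A : {set aT}) (D : {set rT}) :
  {in A &, injective g} -> g @: A \subset D -> #|D| <= #|A| -> g @: A = D.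
Proof.
move=> hi hs hc; apply/eqP; rewrite eqEcard hs /= card_in_imset //.
Qed.

Ltac glia := repeat match goal with H : _ |- _ => clear H end; lia.

Section Main.
Variables (T : finType) (e : rel T).
Hypothesis esym : symmetric e.
Hypothesis eirr : irreflexive e.
Hypothesis conn : connected_graph e.
Local Notation d := (dist conn).

Definition N x := [set y | e x y].
Definition C p y := [set u | e y u & (d p u).+1 == d p y].
Definition Bs p y := [set u | e y u & d p u == (d p y).+1].

Variables (k lam mu : nat).
Hypothesis hk : forall x, #|N x| = k.
Hypothesis hlam : forall x y, e x y -> #|N x :&: N y| = lam.
Hypothesis hmu : forall x y, d x y = 2 -> #|N x :&: N y| = mu.
Hypothesis hkmu : k = mu.*2.+1.
Hypothesis hmu2 : 2 <= mu.
Hypothesis hdiam : forall x y, d x y <= 5.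
Variables x0 z0 : T.
Hypothesis h05 : d x0 z0 = 5.

Lemma dS x y : d x y = d y x. Proof. exact: dist_sym. Qed.
Lemma dT x y z : d x z <= d x y + d y z. Proof. exact: dist_tri. Qed.
Lemma d1 x y : e x y -> d x y = 1. Proof. by rewrite -dist1E // => /eqP. Qed.
Lemma d1E x y : (d x y == 1) = e x y. Proof. exact: dist1E. Qed.
Lemma d0 x : d x x = 0. Proof. exact: dist0. Qed.
Lemma d0E x y : (d x y == 0) = (x == y). Proof. exact: dist0E. Qed.
Lemma dP x y n : d x y = n.+1 -> exists2 w, e w y & d x w = n.
Proof. exact: dist_pred. Qed.

Lemma adjd p x y : e x y -> d p y <= (d p x).+1 /\ d p x <= (d p y).+1.
Proof.
move=> h; have := d1 h; have := dT p x y; have := dT p y x.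
rewrite (dS y x) => ? ? ?; lia.
Qed.

Lemma inN x u : (u \in N x) = e x u. Proof. by rewrite inE. Qed.
Lemma inC p y u : (u \in C p y) = e y u && ((d p u).+1 == d p y).
Proof. by rewrite inE. Qed.
Lemma inB p y u : (u \in Bs p y) = e y u && (d p u == (d p y).+1).
Proof. by rewrite inE. Qed.

Lemma neq_of_d x y : d x y != 0 -> x != y.
Proof. by rewrite d0E. Qed.

Lemma d2 x y : x != y -> ~~ e x y -> (exists2 w, e x w & e w y) -> d x y = 2.
Proof.
move=> hne hn [w h1 h2]; have := d1 h1; have := d1 h2; have := dT x w y.
rewrite -d0E in hne; rewrite -d1E in hn; lia.
Qed.

Lemma cmu p y : d p y = 2 -> #|C p y| = mu.
Proof.
move=> h; rewrite -(hmu h); apply: eq_card => u.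
rewrite !inE h -(d1E p u) esym andbC; by [].
Qed.

Lemma lam_le_mu : lam <= mu.
Proof.
have [w1 e1 h1] : exists2 w, e w x0 & d z0 w = 4 by apply: dP; rewrite dS.
have [a ea ha] : exists2 a, e a z0 & d w1 a = 3 by apply: dP; rewrite dS h1.
have [w3 e3 h3] := dP ha.
have hx3 : 3 <= d x0 w3.
  have := dT x0 w3 z0; have := dT w3 a z0; rewrite h05 (d1 e3) (d1 ea); lia.
have h13 : d w1 w3 = 2 by [].
have H := @card_disj_le _ (x0 |: (N x0 :&: N w1)) (N w1 :&: N w3) (N w1).
have ex1 : e x0 w1 by rewrite esym.
rewrite cardsU1 (hlam ex1) (hmu h13) hk !inE eirr /= in H.
have : 1 + lam + mu <= k.
  apply: H.
  - apply/subsetP => u; rewrite !inE => /orP [/eqP ->|/andP [_ h]] //.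
  - by apply/subsetP => u; rewrite !inE => /andP [].
  - move=> u; rewrite !inE => /orP [/eqP ->|/andP [hu _]].
      apply/negP => /andP [_ hw]; have := d1 hw; rewrite dS; lia.
    apply/negP => /andP [_ hw]; have := d1 hw; have := d1 hu.
    have := dT x0 u w3; rewrite (dS u w3); lia.
lia.
Qed.

Lemma growth p y z i : d p y = i.+2 -> z \in C p y -> #|C p z| < #|C p y|.
Proof.
move=> hy; rewrite inC hy => /andP [eyz /eqP [hz]].
set A := C p z; set Bz := C p y :\ z.
have HD := dcount A Bz e.
have hz_in : z \in C p y by rewrite inC eyz hy hz eqxx.
have cB : #|Bz| = #|C p y| - 1 by rewrite /Bz [#|C p y|](cardsD1 z) hz_in; lia.
have L1 : \sum_(a in A) #|[set b in Bz | e a b]| = #|A| * (mu - 1).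
  apply: sum_const_eq => w; rewrite inC hz => /andP [ezw /eqP [hw]].
  have hwy : d w y = 2.
    have := dT w z y; have := dT p w y.
    rewrite (dS w z) (d1 ezw) (dS z y) (d1 eyz) hy hw; lia.
  have -> : [set b in Bz | e w b] = (N w :&: N y) :\ z.
    apply/setP => t; rewrite !inE.
    case: (t =P z) => //= _; case ewt: (e w t) => //=; rewrite ?andbF //.
    case eyt: (e y t) => //=; rewrite hy; apply/eqP.
    have := adjd p ewt; have := adjd p eyt; rewrite hw hy; lia.
  have := cardsD1 z (N w :&: N y); rewrite (hmu hwy) !inE (esym w z) ezw eyz /=; lia.
have L2 : \sum_(b in Bz) #|[set a in A | e a b]| <= #|Bz| * (mu - 1).
  apply: sum_const_le => t; rewrite !inE => /andP [htz /andP [eyt /eqP ht]].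
  have le1 : #|N t :&: N z| <= mu.
    case etz: (e t z); first by rewrite hlam // lam_le_mu.
    rewrite hmu //; apply: d2 => //; first by rewrite etz.
    by exists y; rewrite // esym.
  have yin : y \in N t :&: N z by rewrite !inE esym eyt esym eyz.
  have : #|[set a in A | e a t]| <= #|(N t :&: N z) :\ y|.
    apply: subset_leq_card; apply/subsetP => w; rewrite !inE.
    move=> /andP [/andP [ezw /eqP hw] ewt].
    rewrite (esym t w) ewt ezw !andbT; apply/eqP => wy; move: hw; rewrite wy hy hz; lia.
  have := cardsD1 y (N t :&: N z); rewrite yin; lia.
have : #|A| * (mu - 1) <= (#|C p y| - 1) * (mu - 1) by rewrite -L1 HD -cB.
rewrite leq_pmul2r; last by lia.
have : 0 < #|C p y| by apply/card_gt0P; exists z.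
lia.
Qed.

Lemma cge p y : 2 <= d p y -> mu + (d p y - 2) <= #|C p y|.
Proof.
move hn: (d p y) => n; move: hn; case: n => // [] [] // n.
elim: n y => [|n IH] y hy _.
  by rewrite (cmu hy) subnn addn0.
have [w ew hw] := dP hy.
have win : w \in C p y by rewrite inC esym ew hw hy eqxx.
have := growth hy win; have := IH w hw erefl; lia.
Qed.

Lemma C_sub p y : C p y \subset N y.
Proof. by apply/subsetP => u; rewrite !inE => /andP []. Qed.

Lemma star p q s : d p q = 5 -> e s q -> d p s = 4 -> mu.*2 <= #|C p s|.
Proof.
move=> hpq esq hps.
have ct t : t \in C p s -> #|C p t| = mu.+1.
  rewrite inC hps => /andP [est /eqP [ht]].
  have htq : d t q = 2.
    have := dT t s q; have := dT p t q; rewrite hpq ht (d1 esq) (dS t s) (d1 est); lia.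
  apply/eqP; rewrite eqn_leq; apply/andP; split; last first.
    by have := cge (p:=p) (y:=t); rewrite ht; lia.
  have := @card_disj_le _ (C p t) (N t :&: N q) (N t).
  rewrite hk hmu // hkmu => H.
  suff : #|C p t| + mu <= mu.*2.+1 by lia.
  apply: H; first exact: C_sub.
    by apply/subsetP => u; rewrite !inE => /andP [].
  move=> u; rewrite inC ht !inE => /andP [_ /eqP hu]; apply/negP => /andP [_ equ].
  have := adjd p equ; rewrite hpq; lia.
have cs : mu + 2 <= #|C p s| by have := cge (p:=p) (y:=s); rewrite hps; lia.
set A := C p s; set Bn := [set v | (d p v == 2) && (d v s == 2)].
have HD := dcount A Bn e.
have L1 : \sum_(a in A) #|[set b in Bn | e a b]| = #|A| * mu.+1.
  apply: sum_const_eq => t ht; rewrite -(ct t ht); apply: eq_card.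
  move: ht; rewrite inC hps => /andP [est /eqP [ht]].
  move=> v; rewrite !inE ht eqSS; case etv: (e t v); rewrite ?andbT ?andbF //=.
  case: (d p v =P 2) => //= hv; apply/eqP.
  have := dT v t s; have := dT p v s; rewrite hv hps (dS v t) (d1 etv) (dS t s) (d1 est).
  lia.
have L2 : \sum_(b in Bn) #|[set a in A | e a b]| = #|Bn| * mu.
  apply: sum_const_eq => v; rewrite !inE => /andP [/eqP hv /eqP hvs].
  rewrite -(hmu hvs); apply: eq_card => t; rewrite !inE.
  rewrite (esym v t) andbC; case evt: (e t v) => //=; case est: (e s t) => //=.
  rewrite hps; apply/eqP; have := adjd p evt; have := adjd p est; rewrite hv hps.
  rewrite esym in evt. lia.
have hd : mu %| #|A| * mu.+1 by rewrite -L1 HD L2 dvdn_mull.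
rewrite Gauss_dvdl ?coprimenS // in hd.
case/dvdnP: hd => m hm; move: cs; rewrite -/A hm.
case: m {hm} => [|[|m]]; rewrite ?mul0n ?mul1n; try lia.

Qed.

Lemma lam0 : lam = 0.
Proof.
have [u eu hu] : exists2 w, e w x0 & d z0 w = 4 by apply: dP; rewrite dS.
have hs := star (p:=z0) (q:=x0) (s:=u) ltac:(by rewrite dS) eu hu.
have H := @card_disj_le _ (x0 |: (N x0 :&: N u)) (C z0 u) (N u).
have exu : e x0 u by rewrite esym.
rewrite cardsU1 (hlam exu) hk !inE eirr /= in H.
suff : 1 + lam + #|C z0 u| <= k by rewrite hkmu in hs *; lia.
apply: H.
- by apply/subsetP => w; rewrite !inE => /orP [/eqP ->|/andP [_ h]].
- exact: C_sub.
move=> w; rewrite !inE hu => /orP [/eqP ->|/andP [exw _]];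
  apply/negP => /andP [_ /eqP [hw]].
  by move: hw; rewrite dS h05.
have := d1 exw; have := dT z0 w x0; rewrite (dS z0 x0) h05 hw (dS w x0); lia.
Qed.


Lemma tri_free a b c : e a b -> e b c -> e a c -> False.
Proof.
move=> hab hbc hac.
have := hlam hac; rewrite lam0 => /eqP; rewrite cards_eq0 => /eqP h.
have : b \in N a :&: N c by rewrite !inE hab esym hbc.
by rewrite h inE.
Qed.

Lemma nbr_s s u : d x0 s = 4 -> e s z0 -> e s u -> u != z0 -> d x0 u = 3.
Proof.
move=> hs esz esu uz.
have hst := star h05 esz hs.
case: (boolP (u \in C x0 s)) => [|hu]; first by rewrite inC hs => /andP [_ /eqP [->]].
have H := @card_disj_le _ [set z0; u] (C x0 s) (N s).
rewrite cards2 eq_sym uz hk hkmu in H.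
suff : 2 + #|C x0 s| <= mu.*2.+1 by lia.
apply: H.
- by apply/subsetP => w; rewrite !inE => /orP [] /eqP ->; rewrite // esym.
- exact: C_sub.
move=> w; rewrite in_set2 => /orP [] /eqP ->; last by [].
by rewrite inC hs h05 andbF.
Qed.

Lemma no_mu3 : 3 <= mu -> False.
Proof.
move=> hm3.
have c5 := cge (p:=x0) (y:=z0); rewrite h05 in c5.
have /card_gt1P [s [s' [hs hs' ss']]] : 1 < #|C x0 z0| by move: c5 hm3; glia.
move: hs hs'; rewrite !inC h05 => /andP [ezs /eqP [ds]] /andP [ezs' /eqP [ds']].
have esz : e s z0 by rewrite esym.
have esz' : e s' z0 by rewrite esym.
have nss : ~~ e s s'.
  by apply/negP => h; apply: (tri_free h esz' _); rewrite esym.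
have dss : d s s' = 2 by apply: d2 => //; exists z0.
set R := (N s :&: N s') :\ z0.
have zin : z0 \in N s :&: N s' by rewrite !inE esz esz'.
have cR : #|R| = mu - 1.
  by rewrite /R; have := cardsD1 z0 (N s :&: N s'); rewrite zin (hmu dss); move: hm3; glia.
have inR t : t \in R -> [/\ e s t, e s' t, t != z0 & d x0 t = 3].
  rewrite !inE => /and3P [tz est est']; split => //; exact: (nbr_s ds esz est tz).
have /card_gt1P [t1 [t2 [h1 h2 t12]]] : 1 < #|R| by move: cR hm3; glia.
have [est1 es't1 t1z dt1] := inR _ h1.
have [est2 es't2 t2z dt2] := inR _ h2.
have key v : e v t1 -> d x0 v = 2 -> e v t2.
  move=> evt1 dv.
  have dvz : d v z0 = 3.
    have := dT v t1 z0; have := dT t1 s z0; have := dT x0 v z0.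
    rewrite (d1 evt1) (dS t1 s) (d1 est1) (d1 esz) h05 dv; glia.
  have cz : #|C z0 v| <= mu.+1.
    have H := @card_disj_le _ (C z0 v) (N x0 :&: N v) (N v).
    rewrite hk hkmu hmu // in H.
    suff : #|C z0 v| + mu <= mu.*2.+1 by glia.
    apply: H; first exact: C_sub.
      by apply/subsetP => u; rewrite !inE => /andP [].
    move=> u; rewrite inC => /andP [_ /eqP hu]; rewrite !inE.
    apply/negP => /andP [exu _]; have := adjd z0 exu; rewrite (dS z0 x0) h05 (dS z0 v) dvz in hu *.
    move: hu; glia.
  have sub1 a : e a z0 -> N a :&: N v \subset C z0 v.
    move=> eaz; apply/subsetP => u; rewrite !inE => /andP [eau evu].
    rewrite evu /= (dS z0 v) dvz; apply/eqP.
    have := adjd z0 eau; have := adjd z0 evu; rewrite (dS z0 v) dvz (dS z0 a) (d1 eaz).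
    glia.
  have dsv a : d x0 a = 4 -> e a t1 -> d a v = 2.
    move=> da eat; have := dT a t1 v; have := dT x0 v a.
    rewrite (d1 eat) (dS t1 v) (d1 evt1) da dv (dS v a); glia.
  have P1 := hmu (dsv _ ds est1).
  have P2 := hmu (dsv _ ds' es't1).
  have U : #|(N s :&: N v) :|: (N s' :&: N v)| <= mu.+1.
    apply: leq_trans cz; apply: subset_leq_card; rewrite subUset !sub1 //.
  have := cardsUI (N s :&: N v) (N s' :&: N v); rewrite P1 P2 => hUI.
  have sR : (N s :&: N v) :&: (N s' :&: N v) \subset R.
    apply/subsetP => u; rewrite !inE => /andP [/andP [esu evu] /andP [es'u _]].
    rewrite esu es'u !andbT; apply/eqP => uz; move: evu; rewrite uz -d1E dvz.
    by [].
  have : (N s :&: N v) :&: (N s' :&: N v) == R.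
    rewrite eqEcard sR /= cR; move: hUI U; glia.
  move/eqP => eR; move: h2; rewrite -eR !inE => /andP [_ /andP [_ ->]].
  by [].
have ct1 := cge (p:=x0) (y:=t1); rewrite dt1 in ct1.
have nt12 : ~~ e t1 t2.
  by apply/negP => h; apply: (tri_free est1 h est2).
have d12 : d t1 t2 = 2 by apply: d2 => //; exists s; rewrite // esym.
have H := @card_disj_le _ [set s; s'] (C x0 t1) (N t1 :&: N t2).
rewrite cards2 ss' (hmu d12) in H.
suff : 2 + #|C x0 t1| <= mu by move: ct1; glia.
apply: H.
- by apply/subsetP => w; rewrite in_set2 !inE => /orP [] /eqP ->; rewrite -!(esym _ t1) -!(esym _ t2) ?est1 ?est2 ?es't1 ?es't2.
- apply/subsetP => w; rewrite inC dt1 !inE => /andP [ew /eqP [dw]].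
  by rewrite ew /= esym; apply: key; rewrite // esym.
move=> w; rewrite in_set2 => /orP [] /eqP ->; rewrite inC dt1 ?ds ?ds' andbF //.
Qed.




Hypothesis hm2 : mu = 2.

Lemma k5 : k = 5. Proof. by rewrite hkmu hm2. Qed.

Lemma cg2 p y : d p y <= #|C p y|.
Proof.
case h: (d p y) => [|[|n]] //.
  apply/card_gt0P; exists p; rewrite inC d0 h eqxx andbT esym -d1E h.
  by [].
have := cge (p:=p) (y:=y); rewrite h hm2; glia.
Qed.

Lemma struct p q : d p q = 5 -> forall y,
  [/\ d p y + d q y = 5, #|C p y| = d p y, #|Bs p y| = 5 - d p y &
      forall u, e y u -> (d p u == (d p y).+1) || (d p y == (d p u).+1)].
Proof.
move=> hpq.
have disj y : d p y + d q y = 5 -> forall w, w \in C p y -> w \notin C q y.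
  move=> hy w; rewrite !inC => /andP [_ /eqP h1]; apply/negP => /andP [_ /eqP h2].
  have := dT p w q; rewrite (dS w q) hpq; move: hy h1 h2; glia.
have cov y : d p y + d q y = 5 -> forall u, e y u -> (u \in C p y) || (u \in C q y).
  move=> hy u eyu; apply: (@cover2 _ (C p y) (C q y) (N y) u (C_sub _ _) (C_sub _ _) (disj y hy)); last by rewrite inN.
  rewrite hk k5; have := cg2 p y; have := cg2 q y; move: hy; glia.
have A1 y : d p y + d q y = 5.
  move hn: (d p y) => n; elim: n y hn => [|n IH] y hn.
    move/eqP: hn; rewrite d0E => /eqP <-; by rewrite dS hpq.
  have [w ew hw] := dP hn.
  have hw' : d p w + d q w = 5 by rewrite hw; exact: IH.
  have := cov w hw' y ew; rewrite !inC hn hw ew /=.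
  case/orP => /eqP h; first by move: h; glia.
  have := IH w hw; move: h; glia.
move=> y; have hy := A1 y.
have cc : #|C p y| + #|C q y| <= 5.
  rewrite -k5 -(hk y); apply: card_disj_le; try exact: C_sub; exact: disj.
have cp := cg2 p y; have cq := cg2 q y.
have bip u : e y u -> (d p u == (d p y).+1) || (d p y == (d p u).+1).
  move=> eyu; case/orP: (cov y hy u eyu); rewrite inC eyu /= => /eqP h.
    by rewrite h eqxx orbT.
  have := A1 u; move: h hy; glia.
split => //; first by move: cc cp cq hy; glia.
apply/eqP; rewrite eqn_leq; apply/andP; split.
  have : #|Bs p y| + #|C p y| <= 5.
    rewrite -k5 -(hk y); apply: card_disj_le.
    - by apply/subsetP => u; rewrite !inE => /andP [].
    - exact: C_sub.
    move=> w; rewrite inB inC => /andP [_ /eqP h1]; apply/negP => /andP [_ /eqP h2].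
    by move: h1 h2; glia.
  by move: cp; glia.
have : C q y \subset Bs p y.
  apply/subsetP => u; rewrite inC inB => /andP [eyu /eqP h]; rewrite eyu /=.
  by have := A1 u; move: h hy; glia.
move/subset_leq_card; move: cc cp cq hy; glia.
Qed.

Definition Lv p i := [set y | d p y == i].

Lemma dcL p i : \sum_(y in Lv p i.+1) #|C p y| = \sum_(w in Lv p i) #|Bs p w|.
Proof.
have := dcount (Lv p i.+1) (Lv p i) (fun y w => e y w).
have -> : \sum_(a in Lv p i.+1) #|[set b in Lv p i | e a b]| =
          \sum_(y in Lv p i.+1) #|C p y|.
  apply: eq_bigr => y; rewrite inE => /eqP hy; apply: eq_card => w.
  by rewrite !inE hy eqSS andbC.
move=> ->; apply: eq_bigr => w; rewrite inE => /eqP hw; apply: eq_card => y.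
by rewrite !inE hw andbC esym.
Qed.

Lemma cardT p : #|T| = \sum_(i < 6) #|Lv p i|.
Proof.
have H n : #|[set y | d p y < n]| = \sum_(i < n) #|Lv p i|.
  elim: n => [|n IH].
    by rewrite big_ord0; apply/eqP; rewrite cards_eq0; apply/eqP/setP => y; rewrite !inE.
  rewrite big_ord_recr /= -IH.
  have -> : [set y | d p y < n.+1] = [set y | d p y < n] :|: Lv p n.
    by apply/setP => y; rewrite !inE ltnS leq_eqVlt orbC.
  rewrite cardsU; suff -> : [set y | d p y < n] :&: Lv p n = set0 by rewrite cards0 subn0.
  by apply/setP => y; rewrite !inE; case: (d p y =P n) => [->|]; rewrite ?ltnn ?andbF.
rewrite -H -cardsT; apply: eq_card => y; rewrite !inE.
by have := hdiam p y; glia.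
Qed.

Lemma Lv0 p : #|Lv p 0| = 1.
Proof.
rewrite -(cards1 p); apply: eq_card => y; rewrite !inE d0E eq_sym; by [].
Qed.

Lemma T32 : #|T| = 32.
Proof.
have st := struct h05.
have eq i : i < 5 -> #|Lv x0 i.+1| * i.+1 = #|Lv x0 i| * (5 - i).
  move=> hi; have := dcL x0 i.
  rewrite (@sum_const_eq _ _ _ i.+1); last first.
    by move=> y; rewrite inE => /eqP hy; have [_ -> _ _] := st y.
  rewrite (@sum_const_eq _ _ _ (5 - i)) //.
  by move=> y; rewrite inE => /eqP hy; have [_ _ -> _] := st y; rewrite hy.
rewrite (cardT x0) !big_ord_recr big_ord0 /= Lv0.
have := eq 0 erefl; have := eq 1 erefl; have := eq 2 erefl; have := eq 3 erefl;
have := eq 4 erefl; rewrite Lv0.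
glia.
Qed.

Lemma antipode p : exists q, d p q = 5.
Proof.
have ineq i : #|Lv p i.+1| * i.+1 <= #|Lv p i| * (5 - i).
  have := dcL p i => H.
  apply: (@leq_trans (\sum_(y in Lv p i.+1) #|C p y|)).
    by apply: sum_const_ge => y; rewrite inE => /eqP <-; apply: cg2.
  rewrite H; apply: sum_const_le => w; rewrite inE => /eqP hw.
  have : #|Bs p w| + #|C p w| <= 5.
    rewrite -k5 -(hk w); apply: card_disj_le.
    - by apply/subsetP => u; rewrite !inE => /andP [].
    - exact: C_sub.
    move=> u; rewrite inB inC => /andP [_ /eqP h1]; apply/negP => /andP [_ /eqP h2].
    by move: h1 h2; glia.
  have := cg2 p w; rewrite hw; glia.
have := cardT p; rewrite T32 !big_ord_recr big_ord0 /= Lv0.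
have := ineq 0; have := ineq 1; have := ineq 2; have := ineq 3; have := ineq 4.
rewrite Lv0 => h0 h1 h2 h3 h4 hs.
have : 0 < #|Lv p 5| by move: h0 h1 h2 h3 h4 hs; glia.
by case/card_gt0P => q; rewrite inE => /eqP hq; exists q.
Qed.

Lemma Cfull p y : #|C p y| = d p y.
Proof. by have [q hq] := antipode p; have [_ -> _ _] := struct hq y. Qed.

Lemma Bfull p y : #|Bs p y| = 5 - d p y.
Proof. by have [q hq] := antipode p; have [_ _ -> _] := struct hq y. Qed.

Lemma bip p y u : e y u -> (d p u = (d p y).+1) \/ (d p y = (d p u).+1).
Proof.
have [q hq] := antipode p; have [_ _ _ h] := struct hq y.
by move/h => /orP [] /eqP; [left|right].
Qed.

Definition F y := C y x0.

Lemma FinN y : F y \subset N x0.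
Proof. by apply/subsetP => u; rewrite inC inN => /andP []. Qed.

Lemma cardF y : #|F y| = d x0 y.
Proof. by rewrite /F Cfull dS. Qed.

Lemma F_mono y y' : e y y' -> d x0 y' = (d x0 y).+1 -> F y \subset F y'.
Proof.
move=> eyy hy; apply/subsetP => u; rewrite !inC => /andP [exu /eqP hu].
rewrite exu /=; apply/eqP.
have a1 := dT y' y u; have a2 := dT y' u x0.
rewrite (dS y' y) (d1 eyy) in a1; rewrite (dS u x0) (d1 exu) in a2.
rewrite (dS y' x0) hy; rewrite (dS y x0) in hu.
move: a1 a2 hu; rewrite (dS y' x0) hy; glia.
Qed.

Lemma F_inj L : forall y y', d x0 y = L -> d x0 y' = L -> F y = F y' -> y = y'.
Proof.
elim/ltn_ind: L => L IH y y' hy hy' hF.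
case: L IH hy hy' => [|[|[|L]]] IH hy hy'.
- move/eqP: hy; rewrite d0E => /eqP <-.
  by move/eqP: hy'; rewrite d0E => /eqP <-.
- have : y \in F y.
    rewrite inC d0 (dS y x0) hy eqxx andbT -d1E; by apply/eqP.
  rewrite hF inC (dS y' x0) hy' => /andP [_ /eqP [/eqP]].
  by rewrite d0E => /eqP ->.
- have /card_gt1P [u1 [u2 [h1 h2 u12]]] : 1 < #|F y| by rewrite cardF hy.
  have inF z u : d x0 z = 2 -> u \in F z -> e x0 u /\ e z u.
    move=> hz; rewrite inC (dS z x0) hz => /andP [exu /eqP [hu]]; split => //.
    by rewrite -d1E hu.
  have [ex1 ey1] := inF _ _ hy h1; have [ex2 ey2] := inF _ _ hy h2.
  move: h1 h2; rewrite hF => h1 h2.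
  have [_ ey'1] := inF _ _ hy' h1; have [_ ey'2] := inF _ _ hy' h2.
  have d12 : d u1 u2 = 2.
    apply: d2 => //; last by exists x0; rewrite // esym.
    by apply/negP => h; apply: (tri_free _ ex2 h); rewrite esym.
  have S2 := hmu d12; rewrite hm2 in S2.
  have x0in : x0 \in N u1 :&: N u2 by rewrite !inE !(esym _ x0) ex1 ex2.
  have : #|(N u1 :&: N u2) :\ x0| == 1.
    by have := cardsD1 x0 (N u1 :&: N u2); rewrite x0in S2; glia.
  case/cards1P => a ha.
  have yin z : d x0 z = 2 -> e z u1 -> e z u2 -> z \in (N u1 :&: N u2) :\ x0.
    move=> hz e1 e2; rewrite !inE !(esym _ z) e1 e2 /= andbT.
    by apply/eqP => zx; move: hz; rewrite zx d0.
  have := yin _ hy ey1 ey2; have := yin _ hy' ey'1 ey'2.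
  by rewrite ha !inE => /eqP -> /eqP ->.
have down z : d x0 z = L.+3 -> {in C x0 z &, injective F} /\
    F @: C x0 z = [set F z :\ a | a in F z].
  move=> hz.
  have inj : {in C x0 z &, injective F}.
    move=> w w'; rewrite !inC hz => /andP [_ /eqP [hw]] /andP [_ /eqP [hw']] eF.
    exact: (IH L.+2 (ltnSn _) w w' hw hw' eF).
  split => //; apply: image_full => //; last by rewrite Cfull -cardF leq_imset_card.
  apply/subsetP => S /imsetP [w hw ->].
  move: hw; rewrite inC hz => /andP [ezw /eqP [hw]].
  have sub : F w \subset F z by apply: F_mono; [rewrite esym | rewrite hz hw].
  have hc : #|F z| = #|F w|.+1 by rewrite !cardF hz hw.
  have [a ha hFz] := add_one sub hc.
  have aF : a \in F z by rewrite hFz setU11.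
  by apply/imsetP; exists a => //; rewrite hFz setU1K.
have [injy imy] := down y hy; have [injy' imy'] := down y' hy'.
rewrite -hF in imy'.
set D := [set F y :\ a | a in F y] in imy imy'.
set W := C x0 y :&: C x0 y'.
have sub : D \subset F @: W.
  apply/subsetP => S hS.
  have := hS; rewrite -{1}imy => /imsetP [w hw eS].
  move: hS; rewrite -imy' => /imsetP [w' hw' eF].
  have ww : w = w'.
    move: (hw) (hw'); rewrite !inC hy hy' => /andP [_ /eqP [h1]] /andP [_ /eqP [h2]].
    exact: (IH L.+2 (ltnSn _) w w' h1 h2 (etrans (Logic.eq_sym eS) eF)).
  by rewrite eS; apply: imset_f; rewrite inE hw ww hw'.
have cD : #|D| = L.+3 by rewrite -imy card_in_imset // Cfull.
have cW : L.+3 <= #|W|.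
  by rewrite -cD; apply: leq_trans (subset_leq_card sub) (leq_imset_card _ _).
case: (y =P y') => // ne.
have /card_gt0P [w hw] : 0 < #|W| by move: cW; glia.
move: (hw); rewrite !inE => /andP [/andP [eyw _] /andP [ey'w _]].
have nyy : ~~ e y y'.
  by apply/negP => h; case: (bip x0 h); rewrite hy hy'; glia.
have dyy : d y y' = 2.
  by apply: d2 => //; [apply/eqP | exists w; rewrite // esym].
have := hmu dyy; rewrite hm2 => c2.
have : #|W| <= #|N y :&: N y'|.
  apply: subset_leq_card; apply/subsetP => u; rewrite !inE.
  by move=> /andP [/andP [h1 _] /andP [h2 _]]; rewrite h1 h2.
move: cW c2; glia.
Qed.


Lemma F_up z : {in Bs x0 z &, injective F} /\
    F @: Bs x0 z = [set b |: F z | b in N x0 :\: F z].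
Proof.
have inj : {in Bs x0 z &, injective F}.
  move=> w w'; rewrite !inB => /andP [_ /eqP hw] /andP [_ /eqP hw'] eF.
  by apply: (@F_inj (d x0 z).+1).
split => //; apply: image_full => //; last first.
  rewrite Bfull; apply: leq_trans (leq_imset_card _ _) _.
  by rewrite cardsDS ?FinN // hk k5 cardF.
apply/subsetP => S /imsetP [w hw ->].
move: hw; rewrite inB => /andP [ezw /eqP hw].
have sub : F z \subset F w by apply: F_mono.
have hc : #|F w| = #|F z|.+1 by rewrite !cardF hw.
have [b hb hFw] := add_one sub hc.
have bN : b \in N x0 by apply: (subsetP (FinN w)); rewrite hFw setU11.
by apply/imsetP; exists b; rewrite // inE hb bN.
Qed.

Lemma adj_of y y' : F y \subset F y' -> #|F y' :\: F y| = 1 -> e y y'.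
Proof.
move=> sub c1.
have hc : #|F y'| = #|F y|.+1.
  by move: c1; rewrite cardsDS // => h; have := subset_leq_card sub; move: h; glia.
have [a ha hFy'] := add_one sub hc.
have aN : a \in N x0 by apply: (subsetP (FinN y')); rewrite hFy' setU11.
have [_ im] := F_up y.
have : F y' \in F @: Bs x0 y by rewrite im hFy'; apply: imset_f; rewrite inE ha aN.
case/imsetP => y'' hy'' eF.
move: (hy''); rewrite inB => /andP [eyy /eqP h''].
have <- // : y'' = y'.
apply: (@F_inj (d x0 y'')) => //.
by rewrite h''; move: hc; rewrite !cardF.
Qed.

Lemma adjF y y' : e y y' = (#|(F y :\: F y') :|: (F y' :\: F y)| == 1).
Proof.
have cU A B : #|(A :\: B) :|: (B :\: A)| = #|A :\: B| + #|B :\: A|.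
  rewrite cardsU; suff -> : (A :\: B) :&: (B :\: A) = set0 by rewrite cards0 subn0.
  by apply/setP => u; rewrite !inE; case: (u \in A); case: (u \in B); rewrite ?andbF.
rewrite cU; apply/idP/idP => [h|].
  case: (bip x0 h) => hd.
    have sub := F_mono h hd; move: (sub); rewrite -setD_eq0 => /eqP ->.
    by rewrite cards0 add0n cardsDS // !cardF hd subSnn.
  have h' : e y' y by rewrite esym.
  have sub := F_mono h' hd; move: (sub); rewrite -setD_eq0 => /eqP ->.
  by rewrite cards0 addn0 cardsDS // !cardF hd subSnn.
case: (boolP (F y \subset F y')) => [s1|s1].
  move: (s1); rewrite -setD_eq0 => /eqP ->; rewrite cards0 add0n => /eqP c.
  exact: adj_of.
case: (boolP (F y' \subset F y)) => [s2|s2].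
  move: (s2); rewrite -setD_eq0 => /eqP ->; rewrite cards0 addn0 => /eqP c.
  by rewrite esym; apply: adj_of.
have : 0 < #|F y :\: F y'|.
  by apply/card_gt0P; move: s1 => /subsetPn [u h1 h2]; exists u; rewrite inE h1 h2.
have : 0 < #|F y' :\: F y|.
  by apply/card_gt0P; move: s2 => /subsetPn [u h1 h2]; exists u; rewrite inE h1 h2.
move=> p1 p2 /eqP; move: p1 p2; glia.
Qed.

Lemma iso : graph_iso e (@cube_adj 5).
Proof.
set s := enum (N x0).
have hs : size s = 5 by rewrite -cardE hk k5.
pose idx (i : 'I_5) : T := nth x0 s i.
have idx_in i : idx i \in N x0.
  by rewrite -mem_enum; apply: mem_nth; rewrite hs.
have idx_inj : injective idx.
  move=> i j /eqP; rewrite /idx nth_uniq ?hs // ?enum_uniq // => /eqP h.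
  exact: val_inj.
have idx_surj a : a \in N x0 -> exists i, idx i = a.
  move=> ha; have hi : index a s < 5 by rewrite -hs index_mem mem_enum.
  by exists (Ordinal hi); rewrite /idx /= nth_index // mem_enum.
pose f (y : T) : cube_vertex 5 := [ffun i => idx i \in F y].
have keyF y y' : #|[set i | f y i != f y' i]| = #|(F y :\: F y') :|: (F y' :\: F y)|.
  rewrite -(card_imset _ idx_inj); apply: eq_card => a.
  case: (boolP (a \in N x0)) => [ha|ha].
    have [i <-] := idx_surj a ha.
    by rewrite mem_imset // in_set !ffunE in_setU !in_setD; case: (idx i \in F y); case: (idx i \in F y').
  have -> : (a \in (F y :\: F y') :|: (F y' :\: F y)) = false.
    apply/negP; rewrite in_setU !in_setD => /orP [] /andP [_ h]; move: ha.
      by rewrite (subsetP (FinN y)).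
    by rewrite (subsetP (FinN y')).
  apply/negP => /imsetP [i _ ai]; move: ha; by rewrite ai idx_in.
have finj : injective f.
  move=> y y' eq.
  have eF : F y = F y'.
    apply/setP => a; case: (boolP (a \in N x0)) => [ha|ha].
      have [i <-] := idx_surj a ha.
      by have := congr1 (fun g : cube_vertex 5 => g i) eq; rewrite /= !ffunE.
    apply/idP/idP => h; move: ha.
      by rewrite (subsetP (FinN y)).
    by rewrite (subsetP (FinN y')).
  apply: (@F_inj (d x0 y)) => //.
  by rewrite -!cardF eF.
exists f; split.
  apply: (@inj_card_bij T _ f finj).
  by rewrite card_ffun card_bool card_ord T32 !expnS expn0.
move=> y y'; rewrite /cube_adj keyF; by rewrite adjF.
Qed.

End Main.

Theorem theorem3p5 (T : finType) (e : rel T) (v k lam mu : nat) :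
  simple_graph e ->
  connected_graph e ->
  has_diameter e 5 ->
  amply_regular e v k lam mu ->
  odd k -> 5 <= k -> mu = (k - 1) %/ 2 ->
  graph_iso e (@cube_adj 5).
Proof.
move=> [esym eirr] conn [hd [x0 [z0 h05]]] [_ hk hlam hmu] hodd h5 hmuk.
have h05' : dist conn x0 z0 = 5 by apply/is_distE.
have hk' x : #|N e x| = k by exact: hk.
have hlam' x y : e x y -> #|N e x :&: N e y| = lam.
  move=> exy; rewrite -(hlam x y exy); apply: eq_card => z; by rewrite !inE.
have hmu' x y : dist conn x y = 2 -> #|N e x :&: N e y| = mu.
  move=> hxy; rewrite -(hmu x y); last by apply/(is_distE conn).
  by apply: eq_card => z; rewrite !inE.
have hdiam x y : dist conn x y <= 5.
  by apply: (hd x y); apply/(is_distE conn).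
have hk2 : k %% 2 = 1 by rewrite modn2 hodd.
have hkmu : k = mu.*2.+1 by rewrite -mul2n; lia.
have hmu2 : 1 < mu by lia.
case: (ltngtP mu 2) => [|hm3|hm2]; first by lia.
  by case: (no_mu3 esym eirr hk' hlam' hmu' hkmu hmu2 h05' hm3).
exact: (iso esym eirr hk' hlam' hmu' hkmu hmu2 hdiam h05' hm2).
Qed.
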